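(* Let $n\ge3$ be odd, $d,R\in\mathbb{Q}$, $d\ne0$, $R$ not a square, $D=d^2-R$, $K_0=\mathbb{Q}(\sqrt R)$, and $P=Z^n-D^{(n-1)/2}(d+\sqrt R)\in K_0[Z]$. Then $f_n=f_n(Z,d,R)$ is irreducible in $\mathbb{Q}[Z]$ if and only if $P$ is irreducible in $K_0[Z]$.
   Context: $f_n(Z,d,R)=\sum_{j=0}^{(n-1)/2}(-1)^j\frac{n}{n-j}\binom{n-j}{j}D^jZ^{n-2j}-2dD^{(n-1)/2}$, which equals $\sqrt D^{\,n}F_n(Z/\sqrt D)-2dD^{(n-1)/2}$ where $F_n(Z)=2T_n(Z/2)$ and $T_n$ is the Chebyshev polynomial of the first kind. (If $x$ is a zero of $P$, then $x+D/x$ is a zero of $f_n$.) *)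

(* Defs.v *)
From HB Require Import structures.
From mathcomp Require Import all_boot all_order all_algebra all_field.
Set Implicit Arguments. Unset Strict Implicit. Unset Printing Implicit Defensive.
Import Order.TTheory GRing.Theory Num.Theory.
Local Open Scope ring_scope.

Definition Dval (d R : rat) : rat := d ^+ 2 - R.

Definition fpoly (n : nat) (d R : rat) : {poly rat} :=
  \sum_(j < (n.-1)./2.+1)
     ((-1) ^+ j * (n%:R / (n - j)%:R) * ('C(n - j, j))%:R * Dval d R ^+ j)%:P
       * 'X ^+ (n - 2 * j)
  - (2 * d * Dval d R ^+ (n.-1)./2)%:P.

(* P = Z^n - D^((n-1)/2) (d + sqrt R) in K0[Z], where s plays sqrt R in L *)
Definition Ppoly (L : fieldExtType rat) (n : nat) (d R : rat) (s : L) : {poly L} :=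
  'X ^+ n - ((Dval d R ^+ (n.-1)./2)%:A * (d%:A + s))%:P.

(* Main.v *)
Require Import Defs.
From HB Require Import structures.
From mathcomp Require Import all_boot all_order all_algebra all_field.
From mathcomp Require Import ring lra zify.
From Stdlib Require Import Classical.
Import Order.TTheory GRing.Theory Num.Theory.
Local Open Scope ring_scope.
Set Implicit Arguments. Unset Strict Implicit. Unset Printing Implicit Defensive.

Definition bb (N j : nat) : nat :=
  if (2 * j <= N)%N then
    ('C(N - j, j) + if j is i.+1 then 'C(N - i.+2, i) else 0)%N
  else 0%N.

Lemma bb0 N : bb N 0 = 1%N.
Proof. by rewrite /bb /= bin0 addn0. Qed.

Lemma bb_big N j : (N < 2 * j)%N -> bb N j = 0%N.
Proof. by rewrite /bb ltnNge => /negbTE ->. Qed.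

Lemma bb_rec N i : (1 <= N)%N -> bb N.+2 i.+1 = (bb N.+1 i.+1 + bb N i)%N.
Proof.
move=> N1; rewrite /bb.
case: (ltnP N (2 * i)) => hi.
  by rewrite !ifF //; apply/negbTE; rewrite -ltnNge; lia.
have h1 : (2 * i.+1 <= N.+2)%N by lia.
rewrite h1.
case: (leqP (2 * i.+1) N.+1) => h2.
  have -> : (N.+2 - i.+1 = (N - i).+1)%N by lia.
  have -> : (N.+2 - i.+2 = N - i)%N by lia.
  have -> : (N.+1 - i.+1 = N - i)%N by lia.
  have -> : (N.+1 - i.+2 = (N - i).-1)%N by lia.
  rewrite binS.
  case: i hi h1 h2 => [|i] hi h1 h2.
    by rewrite !bin0 addn0 subn0.
  have -> : (N - i.+1 = (N - i.+2).+1)%N by lia.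
  rewrite binS /=.
  rewrite (binS (N - i.+2) i).
  move: ('C(N - i.+2, i.+2)) ('C(N - i.+2, i.+1)) ('C(N - i.+2, i)) => a b c; lia.
have hN : N = (2 * i)%N by lia.
subst N; case: i hi h1 h2 N1 => [|i] // hi h1 h2 N1.
have -> : ((2 * i.+1).+2 - i.+2 = i.+2)%N by lia.
have -> : ((2 * i.+1).+2 - i.+3 = i.+1)%N by lia.
have -> : ((2 * i.+1) - i.+1 = i.+1)%N by lia.
have -> : ((2 * i.+1) - i.+2 = i)%N by lia.
by rewrite !binn.
Qed.

Section Lucas.
Variables (K : fieldType) (e y : K).
Hypothesis y0 : y != 0.
Let t := y + e / y.
Definition gg N j : K := (-1) ^+ j * (bb N j)%:R * e ^+ j * t ^+ (N - 2 * j).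
Definition SS B N := \sum_(0 <= j < B) gg N j.

Lemma gg_big N j : (N < 2 * j)%N -> gg N j = 0.
Proof. by move=> h; rewrite /gg bb_big // mulr0 !mul0r. Qed.

Lemma gg_rec0 N : gg N.+2 0 = t * gg N.+1 0.
Proof. by rewrite /gg !bb0 !expr0 !mul1r !subn0 exprS. Qed.

Lemma gg_rec N i : (1 <= N)%N -> gg N.+2 i.+1 = t * gg N.+1 i.+1 - e * gg N i.
Proof.
move=> N1; rewrite /gg bb_rec // natrD.
have E1 : (N.+2 - 2 * i.+1 = N - 2 * i)%N by lia.
rewrite E1.
case: (leqP (2 * i.+1) N.+1) => h.
  have E2 : (N - 2 * i = (N.+1 - 2 * i.+1).+1)%N by lia.
  rewrite E2 exprS !exprS; ring.
rewrite (bb_big h) !exprS; ring.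
Qed.

Lemma SS_rec B N : (1 <= N)%N -> (N.+2 < B)%N ->
  SS B N.+2 = t * SS B N.+1 - e * SS B N.
Proof.
move=> N1; case: B => [//|B] hB.
have HN : SS B.+1 N = \sum_(0 <= i < B) gg N i.
  rewrite /SS big_nat_recr //= gg_big ?addr0 //; lia.
rewrite HN /SS !big_nat_recl // gg_rec0 mulrDr.
rewrite mulr_sumr mulr_sumr.
have -> : \sum_(0 <= i < B) gg N.+2 i.+1 =
   \sum_(0 <= i < B) (t * gg N.+1 i.+1 - e * gg N i).
  by apply: eq_bigr => i _; rewrite gg_rec.
rewrite big_split /= sumrN; ring.
Qed.

Lemma SS_val B N : (1 <= N)%N -> (N < B)%N -> SS B N = y ^+ N + (e / y) ^+ N.
Proof.
move=> N1 NB.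
have base1 : forall B0, (1 < B0)%N -> SS B0 1 = y ^+ 1 + (e / y) ^+ 1.
  move=> [|[|B0]] // _; rewrite /SS big_nat_recl // big1_seq.
    rewrite /gg bb0 muln0 subn0 /t; ring.
  move=> i /andP[_]; rewrite mem_iota => _; rewrite gg_big //; lia.
have base2 : forall B0, (2 < B0)%N -> SS B0 2 = y ^+ 2 + (e / y) ^+ 2.
  move=> [|[|[|B0]]] // _; rewrite /SS !big_nat_recl // big1_seq.
    rewrite /gg bb0 /bb /= (_ : ('C(2-1,1) + 'C(2-2,0))%N = 2%N) // /t; field; exact: y0.
  move=> i /andP[_]; rewrite mem_iota => _; rewrite gg_big //; lia.
elim: N {-2}N (leqnn N) N1 NB => [|M IH] N hN N1 NB; first by lia.
case: N hN N1 NB => [|[|[|N]]] hN N1 NB //; first exact: base1.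
  exact: base2.
rewrite SS_rec; [|lia|lia].
rewrite (IH N.+2) ?(IH N.+1); try lia.
rewrite /t !exprS; field; exact: y0.
Qed.
End Lucas.


Lemma bb_coef n j : (2 * j < n)%N -> (n * 'C(n - j, j) = (n - j) * bb n j)%N.
Proof.
move=> h; rewrite /bb ifT; last by lia.
case: j h => [|i] h; first by rewrite bin0 subn0 addn0.
have := mul_bin_diag (n - i.+1) i.
have -> : ((n - i.+1).-1 = n - i.+2)%N by lia.
move=> E; rewrite mulnDr E.
move: ('C(_, _)) => c; lia.
Qed.

Lemma bb_coefR n j : (2 * j < n)%N ->
  (n%:R / (n - j)%:R * ('C(n - j, j))%:R : rat) = (bb n j)%:R.
Proof.
move=> h; have nz : ((n - j)%:R : rat) != 0 by rewrite pnatr_eq0; lia.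
rewrite mulrAC -natrM bb_coef // natrM mulrAC divff // mul1r. done.

Qed.

Lemma odd_m n : odd n -> n = (2 * (n.-1)./2).+1.
Proof.
move=> on; have := odd_double_half n; rewrite on add1n => E.
have -> : n.-1 = n./2.*2 by rewrite -[n in n.-1]E.
rewrite doubleK; rewrite -mul2n in E; lia.
Qed.

Lemma fpolyE n d R : odd n ->
  fpoly n d R = \sum_(0 <= j < n.+1)
     ((-1) ^+ j * (bb n j)%:R * Dval d R ^+ j)%:P * 'X ^+ (n - 2 * j)
  - (2 * d * Dval d R ^+ (n.-1)./2)%:P.
Proof.
move=> on; rewrite /fpoly; congr (_ - _).
have hn := odd_m on; set m := (n.-1)./2 in hn *.
have hm : (m.+1 <= n.+1)%N by lia.
rewrite (@big_cat_nat _ _ _ m.+1 0 n.+1) //=.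
rewrite [X in _ + X]big1_seq ?addr0; last first.
  move=> j /andP[_]; rewrite mem_iota => /andP[h1 h2].
  by rewrite bb_big ?mulr0 ?mul0r ?polyC0 ?mul0r //; lia.
rewrite big_mkord; apply: eq_bigr => j _.
rewrite -(mulrA _ (_ / _)) bb_coefR //; have := ltn_ord j; lia.
Qed.

Lemma fpoly_eval (K : fieldType) (phi : {rmorphism rat -> K}) n d R y :
  odd n -> y != 0 ->
  (map_poly phi (fpoly n d R)).[y + phi (Dval d R) / y] =
  y ^+ n + (phi (Dval d R) / y) ^+ n - phi (2 * d * Dval d R ^+ (n.-1)./2).
Proof.
move=> on y0; rewrite fpolyE // rmorphB /= map_polyC hornerD hornerN hornerC.
congr (_ - _); rewrite -(SS_val (phi (Dval d R)) y0 (B := n.+1) (N := n)); last first.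
- by [].
- have := odd_m on; lia.
rewrite rmorph_sum horner_sum /SS; apply: eq_bigr => j _.
rewrite rmorphM /= map_polyC map_polyXn hornerCM hornerXn /gg.
congr (_ * _); apply: etrans (_ : phi ((-1) ^+ j * (bb n j)%:R * Dval d R ^+ j) = _) _; first reflexivity.
by rewrite !rmorphM rmorphXn rmorphN1 rmorph_nat rmorphXn.
Qed.


Section Alg.
Variables (F : fieldType) (E : fieldExtType F).
Lemma algM' (a b : F) : (a * b)%:A = a%:A * b%:A :> E.
Proof. exact: (rmorphM (in_alg E)). Qed.
Lemma algD' (a b : F) : (a + b)%:A = a%:A + b%:A :> E.
Proof. exact: (rmorphD (in_alg E)). Qed.
Lemma algB' (a b : F) : (a - b)%:A = a%:A - b%:A :> E.
Proof. exact: (rmorphB (in_alg E)). Qed.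
Lemma algN' (a : F) : (- a)%:A = - a%:A :> E.
Proof. exact: (rmorphN (in_alg E)). Qed.
Lemma algX' (a : F) k : (a ^+ k)%:A = a%:A ^+ k :> E.
Proof. exact: (rmorphXn (in_alg E)). Qed.
Lemma algV' (a : F) : (a^-1)%:A = a%:A^-1 :> E.
Proof. exact: (fmorphV (in_alg E)). Qed.
Lemma alg1' : (1 : F)%:A = 1 :> E.
Proof. exact: scale1r. Qed.
Lemma alg0' : (0 : F)%:A = 0 :> E.
Proof. exact: scale0r. Qed.
Lemma algn' k : (k%:R : F)%:A = k%:R :> E.
Proof. exact: (rmorph_nat (in_alg E)). Qed.
Lemma alg_inj (a b : F) : a%:A = b%:A :> E -> a = b.
Proof. exact: (fmorph_inj (in_alg E)). Qed.
Lemma alg_eq0 (a : F) : (a%:A == 0 :> E) = (a == 0).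
Proof. by rewrite scaler_eq0 oner_eq0 orbF. Qed.
End Alg.


Lemma exists_irred (F : fieldType) (p : {poly F}) :
  (1 < size p)%N -> exists2 q : {poly F}, irreducible_poly q & q %| p.
Proof.
elim: {p}(size p) {-2}p (leqnn (size p)) => [|N IH] p sz p1; first by lia.
case: (classic (irreducible_poly p)) => [ip|nip]; first by exists p.
have p0 : p != 0 by rewrite -size_poly_gt0; lia.
have [q [sq dq nq]] : exists q : {poly F}, [/\ size q != 1%N, q %| p & ~~ (q %= p)].
  apply: NNPP => H; apply: nip; split => // q sq dq.
  apply: NNPP => nq; apply: H; exists q; split => //; exact/negP.
have q0 : q != 0 by apply: contraNneq p0 => q0; move: dq; rewrite q0 dvd0p.
have szq : (size q < size p)%N.
  rewrite ltn_neqAle dvdp_leq // andbT; apply: contraNneq nq => e.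
  by rewrite -dvdp_size_eqp // e.
have q1 : (1 < size q)%N.
  rewrite -size_poly_gt0 in q0; rewrite ltn_neqAle eq_sym sq /=; exact: q0.
have [r ir dr] := IH q ltac:(lia) q1.
by exists r => //; apply: dvdp_trans dq.
Qed.

Lemma kHom_expn (F : fieldType) (M : fieldExtType F) (K : {subfield M})
  (f : 'End(M)) u k : kHom K fullv f -> f (u ^+ k) = (f u) ^+ k.
Proof.
move=> /kHomP_tmp [fK fM]; elim: k => [|k IH]; first by rewrite !expr0 fK ?mem1v.
by rewrite !exprS fM ?memvf // IH.
Qed.

Lemma arith0 (a : nat) : (a.+1 <= 3)%N -> a != 1%N -> (0 < a)%N -> a.+1 = 3%N.
Proof. lia. Qed.
Lemma arith1 (a b N : nat) : (0 < b)%N -> b != 1%N -> (a + b).-1 = N.+1 -> (N < a)%N -> False.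
Proof. lia. Qed.
Lemma arith2 (a b N : nat) : (a <= b)%N -> (N < a)%N -> b = N.+1 -> a = b.
Proof. lia. Qed.

Lemma arith3 (a b N : nat) : (1 < a)%N -> (a <= b)%N -> (b <= N.+1)%N ->
  b != N.+1 -> ((0 < a.-1)%N -> (N <= a.-1)%N) -> False.
Proof. lia. Qed.

Section Main.
Variables (n : nat) (d R : rat) (L : fieldExtType rat) (s : L).
Hypotheses (n3 : (3 <= n)%N) (on : odd n) (d0 : d != 0)
  (Rns : ~ (exists q : rat, q ^+ 2 = R)) (s2 : s ^+ 2 = R%:A)
  (gen : <<1%VS; s>>%VS = fullv).

Let m := (n.-1)./2.
Let D := Dval d R.
Let c : L := (D ^+ m)%:A * (d%:A + s).
Let hn : n = (2 * m).+1. Proof. exact: odd_m. Qed.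

Lemma s_notin (q : rat) : s != q%:A.
Proof.
apply/eqP => sq; apply: Rns; exists q.
apply: (fmorph_inj (in_alg L)); by rewrite rmorphXn /= -sq s2.
Qed.

Lemma Dnz : D != 0.
Proof.
apply/eqP => D0; apply: Rns; exists d; apply/eqP; rewrite -subr_eq0.
by apply/eqP; rewrite -D0.
Qed.

Lemma c_nz : c != 0.
Proof.
rewrite /c mulf_eq0 negb_or alg_eq0 expf_neq0 ?Dnz //=.
apply/negP; rewrite addrC addr_eq0 => /eqP h.
by have := s_notin (- d); rewrite algN' h eqxx.
Qed.

Lemma Dn_eq : (D ^+ n)%:A = (D ^+ m)%:A * (D ^+ m)%:A * (d%:A ^+ 2 - s ^+ 2) :> L.
Proof.
rewrite s2 -!algM' -algX' -algB' -algM'; congr (_%:A).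
by rewrite hn -expr2 -exprM mul2n -muln2 exprS mulrC.
Qed.

Lemma c_quad : c * c - (2 * d * D ^+ m)%:A * c + (D ^+ n)%:A = 0.
Proof. rewrite Dn_eq /c !algM' algn'; ring. Qed.

Lemma c_neq : c * c != (D ^+ n)%:A.
Proof.
apply/eqP => h; have := c_quad; rewrite h.
have Dm : (D ^+ m)%:A != 0 :> L by rewrite alg_eq0 expf_neq0 // Dnz.
rewrite /c !algM' algn' => E.
have : (D ^+ m)%:A * (D ^+ m)%:A * (s * (d%:A + s)) *+ 2 == 0 :> L.
  apply/eqP; rewrite -[RHS]oppr0 -E Dn_eq; ring.
have two : (2 : rat) != 0 by [].
rewrite -mulr_natr -(@algn' _ L 2) !mulf_eq0 !alg_eq0 (negbTE two) (negbTE (expf_neq0 m Dnz)) /= orbF => /orP[s0|].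
  by have := s_notin 0; rewrite (eqP s0) alg0' eqxx.
rewrite addrC addr_eq0 => /eqP h2.
by have := s_notin (- d); rewrite algN' h2 eqxx.
Qed.

Lemma root_f (M : fieldExtType L) (x : M) : x ^+ n = in_alg M c ->
  x != 0 /\ root (map_poly (in_alg M \o in_alg L) (fpoly n d R))
                  (x + (in_alg M \o in_alg L) D / x).
Proof.
move=> xn.
have icnz : in_alg M c != 0 by rewrite fmorph_eq0 c_nz.
have x0 : x != 0.
  by apply: contraNneq icnz => x0; rewrite -xn x0 expr0n; case: (n) n3.
split => //; rewrite /root fpoly_eval // exprMn exprVn xn.
set ic := in_alg M c.
have Q : ic * ic - (in_alg M \o in_alg L) (2 * d * D ^+ m) * ic
         + ((in_alg M \o in_alg L) D) ^+ n = 0.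
  have := congr1 (in_alg M) c_quad; rewrite rmorph0 /= => <-.
  by rewrite /ic [in RHS]algD' [in RHS]algB' [in RHS](@algM' _ M c c) [in RHS](@algM' _ M ((2 * d * D ^+ m)%:A) c) [in RHS]algX' [in RHS]algX'.
apply/eqP; rewrite -[LHS]mulr1 -(divff icnz) mulrA.
set k := (in_alg M \o in_alg L) (2 * d * D ^+ m) in Q *.
set e := (in_alg M \o in_alg L) D in Q *.
have -> : (ic + e ^+ n * ic^-1 - k) * ic = ic * ic - k * ic + e ^+ n.
  by field.
by rewrite Q mul0r.
Qed.

Lemma coef_f k : (fpoly n d R)`_k =
  \sum_(0 <= j < n.+1) ((-1) ^+ j * (bb n j)%:R * D ^+ j) * (k == (n - 2 * j)%N)%:R
  - (if k == 0%N then 2 * d * D ^+ m else 0).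
Proof.
rewrite fpolyE // coefB coef_sum coefC; congr (_ - _).
by apply: eq_bigr => j _; rewrite coefCM coefXn.
Qed.

Lemma size_f : size (fpoly n d R) = n.+1.
Proof.
apply/eqP; rewrite eqn_leq; apply/andP; split.
  apply/leq_sizeP => k hk; rewrite coef_f ifF; last by apply/eqP; lia.
  rewrite subr0 big1_seq // => j _.
  by rewrite (_ : (k == (n - 2 * j)%N) = false) ?mulr0 //; apply/eqP; lia.
rewrite ltnNge; apply/negP => /leq_sizeP /(_ n (leqnn n)) /eqP.
rewrite coef_f ifF; last by apply/eqP; lia.
rewrite subr0 big_nat_recl // big1_seq ?addr0.
  by rewrite bb0 muln0 subn0 eqxx !expr0 !mul1r oner_eq0.
move=> j _; rewrite (_ : (n == (n - 2 * j.+1)%N) = false) ?mulr0 //; apply/eqP; lia.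
Qed.

Lemma dir1 : irreducible_poly (Ppoly n d R s) -> irreducible_poly (fpoly n d R).
Proof.
move=> HP.
have [M dimM [x rx genx]] := irredp_FAdjoin HP.
have szP : size (Ppoly n d R s) = n.+1 by rewrite /Ppoly size_XnsubC //; lia.
rewrite szP /= in dimM.
have xn : x ^+ n = in_alg M c.
  move: rx; rewrite /root /Ppoly rmorphB /= map_polyXn map_polyC /=.
  by rewrite hornerD hornerN hornerXn hornerC subr_eq0 => /eqP.
have [x0 rf] := root_f xn.
set phi := (in_alg M \o in_alg L) in rf.
set th := x + phi D / x in rf.
have xE : x \in <<1; th>>%AS.
  apply/negPn/negP => xNE.
  set E := <<1; th>>%AS in xNE.
  set x' := phi D / x.
  pose q := ('X - x%:P) * ('X - x'%:P).
  have qE : q = 'X^2 - th%:P * 'X + (phi D)%:P.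
    have -> : (phi D)%:P = x%:P * x'%:P.
      by rewrite -polyCM /x' mulrCA divff // mulr1.
    by rewrite /q /th polyCD -/x'; ring.
  have Eq : q \is a polyOver E.
    rewrite qE; apply: rpredD; first apply: rpredB.
    - by apply: rpredX; exact: polyOverX.
    - apply: rpredM; last exact: polyOverX.
      by rewrite polyOverC; exact: memv_adjoin.
    - by rewrite polyOverC; apply: memvZ; exact: mem1v.
  have rq : root q x by rewrite /q rootM root_XsubC eqxx.
  have qm : q \is monic by rewrite /q monicMl ?monicXsubC.
  have q0 : q != 0 by exact: monic_neq0.
  have sq : size q = 3%N.
    by rewrite /q size_mul ?size_XsubC // -size_poly_eq0 size_XsubC.
  have mq : minPoly E x = q.
    have dv := minPoly_dvdp Eq rq.
    have le := dvdp_leq q0 dv.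
    have ne1 : adjoin_degree E x != 1%N by rewrite adjoin_deg_eq1.
    have sm : size (minPoly E x) = 3%N.
      move: le ne1; rewrite size_minPoly sq => le ne1.
      by apply: arith0 => //; rewrite /adjoin_degree.
    by apply/eqP; rewrite -eqp_monic ?monic_minPoly // -dvdp_size_eqp // sm sq.
  have rt : root (map_poly \1%VF (minPoly E x)) x'.
    rewrite (kHom_poly_id (kHom1 E E) (minPolyOver E x)) mq /q rootM.
    by rewrite !root_XsubC eqxx orbT.
  have hg := kHomExtendP (subvv E) (kHom1 E E) rt.
  have gx := kHomExtend_val (kHom1 E E) rt.
  have Efull : <<E; x>>%VS = fullv.
    apply/eqP; rewrite eqEsubv subvf /= -genx; exact: adjoinSl (sub1v E).
  rewrite Efull in hg.
  have cE : in_alg M c \in E by apply: memvZ; exact: mem1v.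
  have := kHom_expn x n hg; rewrite xn gx.
  have [fK _] := kHomP_tmp hg; rewrite fK //.
  rewrite /x' exprMn exprVn xn => h.
  have h2 : in_alg M c * in_alg M c = phi D ^+ n by rewrite {1}h mulfVK // fmorph_eq0 c_nz.
  apply: (negP c_neq); apply/eqP; apply: (@alg_inj _ M).
  rewrite algM'; apply: etrans h2 _.
  by rewrite /phi /= -!algX'.
have Efull2 : <<1; th>>%VS = fullv.
  apply/eqP; rewrite eqEsubv subvf /= -genx.
  rewrite -(Fadjoin_idP xE); exact: adjoinSl (sub1v _).
have dth : adjoin_degree 1 th = n.
  have := dim_Fadjoin 1%AS th; rewrite Efull2 dimM dimv1 muln1; move=> ->; reflexivity.
split; first (rewrite size_f; lia).
move=> q sq dq.
have f0 : fpoly n d R != 0 by rewrite -size_poly_eq0 size_f.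
have q0 : q != 0 by apply: contraNneq f0 => q0; move: dq; rewrite q0 dvd0p.
have bnd : forall p : {poly rat}, p != 0 -> root (map_poly phi p) th ->
    (n.+1 <= size p)%N.
  move=> p p0 rp.
  have Op : map_poly phi p \is a polyOver 1%AS.
    apply/polyOver1P; exists (map_poly (in_alg L) p).
    by rewrite -map_poly_comp.
  have dv := minPoly_dvdp Op rp.
  have := dvdp_leq _ dv; rewrite size_minPoly dth size_map_poly; apply.
  by rewrite map_poly_eq0.
have /dvdpP [r fE] := dq.
have r0 : r != 0 by apply: contraNneq f0 => r0; rewrite fE r0 mul0r.
rewrite fE rmorphM rootM in rf; case/orP: rf => [rr|rq].
  have := bnd r r0 rr; have := size_f; rewrite fE size_mul //.
  move: sq; rewrite -size_poly_gt0 in q0 => h1 h2 h3; exfalso.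
  exact: (arith1 q0 h1 h2 h3).
have h2 := bnd q q0 rq; have h1 := dvdp_leq f0 dq.
rewrite -dvdp_size_eqp //; apply/eqP; exact: (arith2 h1 h2 size_f).
Qed.

Lemma dimL_cop : coprime n (\dim {:L}).
Proof.
have Op : ('X^2 - (R%:A)%:P : {poly L}) \is a polyOver 1%AS.
  apply/polyOver1P; exists ('X^2 - R%:P).
  by rewrite rmorphB /= map_polyXn map_polyC.
have rs : root ('X^2 - (R%:A)%:P : {poly L}) s.
  by rewrite /root hornerD hornerN hornerXn hornerC s2 subrr.
have le := dvdp_leq _ (minPoly_dvdp Op rs).
rewrite size_XnsubC // size_minPoly in le.
have le2 : (adjoin_degree 1 s <= 2)%N by apply: le; rewrite -size_poly_eq0 size_XnsubC.
have e : \dim {:L} = adjoin_degree 1 s.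
  by rewrite -gen (dim_Fadjoin 1%AS s) dimv1 muln1.
rewrite e; move: le2; rewrite /adjoin_degree.
case: (_ .-1) => [|[|k]] //= _; first exact: coprimen1.
by rewrite coprimen2.
Qed.

Lemma dir2 : irreducible_poly (fpoly n d R) -> irreducible_poly (Ppoly n d R s).
Proof.
move=> Hf.
have szP : size (Ppoly n d R s) = n.+1 by rewrite /Ppoly size_XnsubC //; lia.
split; first (rewrite szP; lia).
move=> q sq dq.
case: (boolP (q %= Ppoly n d R s)) => // nq; exfalso.
have P0 : Ppoly n d R s != 0 by rewrite -size_poly_eq0 szP.
have q0 : q != 0 by apply: contraNneq P0 => q0; move: dq; rewrite q0 dvd0p.
have hq : (1 < size q)%N.
  by rewrite -size_poly_gt0 in q0; rewrite ltn_neqAle eq_sym sq.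
have [A iA dA] := exists_irred hq.
have AP : A %| Ppoly n d R s := dvdp_trans dA dq.
have sAq := dvdp_leq q0 dA.
have sqP := dvdp_leq P0 dq.
have nqe : size q != size (Ppoly n d R s) by rewrite dvdp_size_eqp.
have [M dimM [x rx _]] := irredp_FAdjoin iA.
have rP : root (map_poly (in_alg M) (Ppoly n d R s)) x.
  by apply: root_dvdp rx; rewrite dvdp_map.
have xn : x ^+ n = in_alg M c.
  move: rP; rewrite /root /Ppoly rmorphB /= map_polyXn map_polyC /=.
  by rewrite hornerD hornerN hornerXn hornerC subr_eq0 => /eqP.
have [x0 rf] := root_f xn.
set th := x + _ / x in rf.
pose M0 := baseFieldType M.
pose th0 : M0 := th.
have Ef : map_poly (in_alg M0) (fpoly n d R) =
          map_poly (in_alg M \o in_alg L) (fpoly n d R) :> {poly M0}.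
  by apply: eq_map_poly => a /=; rewrite baseField_scaleE.
have r0 : root (map_poly (in_alg M0) (fpoly n d R)) th0 by rewrite Ef.
have Op : map_poly (in_alg M0) (fpoly n d R) \is a polyOver 1%AS.
  by apply/polyOver1P; exists (fpoly n d R).
have dv := minPoly_dvdp Op r0.
have /polyOver1P [mu emu] := minPolyOver 1%AS th0.
rewrite emu dvdp_map in dv.
have smu : size mu = (adjoin_degree 1%AS th0).+1.
  by rewrite -size_minPoly emu size_map_poly.
have [_ Hf2] := Hf.
have := Hf2 mu; rewrite smu /adjoin_degree => /(_ isT dv) /eqp_size.
rewrite size_f => eadj.
have dth : \dim <<1%AS; th0>> = n.
  have e : adjoin_degree 1%AS th0 = n by apply/eq_add_S; rewrite -smu.
  by rewrite dim_Fadjoin dimv1 muln1 e.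
have := field_dimS (subvf <<1%AS; th0>>%AS); rewrite dth.
have dM0 : \dim (fullv : {vspace M0}) = (\dim (fullv : {vspace M}) * \dim {:L})%N.
  rewrite -dim_baseVspace; congr (\dim _); apply/vspaceP => y.
  by rewrite mem_baseVspace; apply/idP/idP => _; exact: memvf.
change ((n %| \dim (fullv : {vspace M0}))%N -> False).
rewrite dM0 dimM Gauss_dvdl ?dimL_cop //.
have sA1 : (1 < size A)%N by case: iA.
move=> /dvdn_leq; rewrite szP in sqP nqe.
exact: arith3 sA1 sAq sqP nqe.
Qed.
End Main.


Unset Implicit Arguments.

(* K0 = Q(sqrt R) is represented by any field extension L of Q generated by an
   element s with s^2 = R. *)
Theorem lemma1 (n : nat) (d R : rat) (L : fieldExtType rat) (s : L) :
  (3 <= n)%N -> odd n -> d != 0 -> ~ (exists q : rat, q ^+ 2 = R) ->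
  s ^+ 2 = R%:A -> <<1%VS; s>>%VS = fullv ->
  irreducible_poly (fpoly n d R) <-> irreducible_poly (Ppoly n d R s).
Proof.
move=> n3 on d0 Rns s2 gen; split.
  exact: (dir2 n3 on d0 Rns s2 gen).
by apply: dir1.
Qed.
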